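(* Let $T_3(n)=2^n-1$ for all integers $n\ge 0$. Define $T_4:\mathbb{Z}_{\ge 0}\to\mathbb{Z}_{\ge 0}$ by $T_4(0)=0$, $T_4(1)=1$, and for $n\ge 2$, \[ T_4(n)=\min_{1\le k<n}\bigl(2\,T_4(n-k)+T_3(k)\bigr). \] For $n\ge 1$ define the balanced Frame--Stewart cost \[ FS_{\lfloor n/2\rfloor}(n)=2\,T_4(\lfloor n/2\rfloor)+T_3\bigl(n-\lfloor n/2\rfloor\bigr). \] Then $FS_{\lfloor n/2\rfloor}(n)=T_4(n)$ for every $1\le n\le 8$, and $FS_{\lfloor n/2\rfloor}(n)>T_4(n)$ for every $n\ge 9$.
   Context: $T_3(n)$ is the minimum number of moves for the three-peg Tower of Hanoi with $n$ discs, and $T_4(n)$ is the minimum number of moves for the four-peg Tower of Hanoi with $n$ discs; the latter is given by the Frame--Stewart recurrence stated in the claim (optimality of this recurrence for four pegs is a known result of Bousch). $FS_{\lfloor n/2\rfloor}(n)$ is the cost of the Frame--Stewart strategy that parks $\lfloor n/2\rfloor$ discs using four pegs, moves the remaining $n-\lfloor n/2\rfloor$ discs with three pegs, and then rebuilds the parked discs. *)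

(* Defs.v *)
From mathcomp Require Import all_boot.
Set Implicit Arguments. Unset Strict Implicit. Unset Printing Implicit Defensive.

Definition T3 (n : nat) : nat := 2 ^ n - 1.

(* Given the list l = [:: T4 0; ...; T4 (m-1)], compute T4 m following the
   Frame--Stewart recurrence:
     T4 0 = 0, T4 1 = 1,
     T4 m = min_{1 <= k < m} (2 * T4 (m - k) + T3 k)   for m >= 2. *)
Definition T4_next (l : seq nat) : nat :=
  let m := size l in
  if m <= 1 then m
  else \big[minn/2 * nth 0 l (m - 1) + T3 1]_(1 <= k < m) (2 * nth 0 l (m - k) + T3 k).

Fixpoint T4_table (n : nat) : seq nat :=
  match n with
  | 0 => [:: 0]
  | n'.+1 => let l := T4_table n' in rcons l (T4_next l)
  end.

Definition T4 (n : nat) : nat := last 0 (T4_table n).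

Definition FS_half (n : nat) : nat := 2 * T4 n./2 + T3 (n - n./2).

(* Main.v *)
Require Import Defs.
From mathcomp Require Import all_boot.
From mathcomp Require Import zify.

Lemma nth_table n i : i <= n -> nth 0 (T4_table n) i = T4 i.
Proof.
elim: n i => [|n IH] i.
  by rewrite leqn0 => /eqP ->.
have Hs : forall m, size (T4_table m) = m.+1.
  by elim=> [|m IHm] //=; rewrite size_rcons IHm.
rewrite leq_eqVlt => /orP [/eqP -> | Hi].
  by rewrite /T4 /= nth_rcons Hs ltnn eqxx last_rcons.
by rewrite /= nth_rcons Hs Hi IH.
Qed.

Lemma size_table m : size (T4_table m) = m.+1.
Proof. by elim: m => [|m IHm] //=; rewrite size_rcons IHm. Qed.

Lemma T4S n : 1 <= n -> T4 n.+1 =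
  \big[minn/2 * T4 n + T3 1]_(1 <= k < n.+1) (2 * T4 (n.+1 - k) + T3 k).
Proof.
move=> Hn.
rewrite /T4 /= last_rcons /T4_next size_table.
have -> : (n.+1 <= 1) = false by case: n Hn.
rewrite subn1 /= nth_table //.
apply: eq_big_nat => k /andP [Hk1 Hk2].
by rewrite nth_table //; lia.
Qed.

Lemma bigmin_le (F : nat -> nat) x0 s k : k \in s ->
  \big[minn/x0]_(i <- s) F i <= F k.
Proof.
elim: s => [|a s IH] //.
rewrite in_cons big_cons => /orP [/eqP -> | Hk].
  exact: geq_minl.
exact: leq_trans (geq_minr _ _) (IH Hk).
Qed.

Lemma T4_le n k : 1 <= k < n -> T4 n <= 2 * T4 (n - k) + T3 k.
Proof.
case: n => [|n] Hk; first by lia.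
rewrite T4S; last by lia.
apply: bigmin_le.
rewrite mem_index_iota; lia.
Qed.

Lemma T4_att n : 2 <= n -> exists k, 1 <= k < n /\ T4 n = 2 * T4 (n - k) + T3 k.
Proof.
case: n => [|n] Hn; first by lia.
rewrite T4S; last by lia.
rewrite big_seq.
apply: (big_ind (fun x => exists k, 1 <= k < n.+1 /\ x = 2 * T4 (n.+1 - k) + T3 k)).
- by exists 1; split; [lia | rewrite subn1].
- move=> x y [k1 [H1 E1]] [k2 [H2 E2]].
  have [Hxy|Hxy] := leqP x y.
  + by exists k1; split => //; rewrite -E1; apply/esym/minn_idPl.
  + by exists k2; split => //; rewrite -E2; apply/esym/minn_idPr/ltnW.
- move=> i; rewrite mem_index_iota => Hi; exists i; split => //.
Qed.

Lemma T4S_list n : 1 <= n -> T4 n.+1 =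
  foldr minn (2 * T4 n + T3 1) [seq 2 * T4 (n.+1 - k) + T3 k | k <- index_iota 1 n.+1].
Proof. by move=> Hn; rewrite T4S // bigop.unlock /reducebig foldr_map. Qed.

Arguments T4 : simpl never.

Definition tab := [:: 0; 1; 3; 5; 9; 13; 17; 25; 33].

Lemma T4_small n : n <= 8 -> T4 n = nth 0 tab n.
Proof.
have t0 : T4 0 = 0 by [].
have t1 : T4 1 = 1 by vm_compute.
have t2 : T4 2 = 3 by rewrite T4S_list //= t1.
have t3 : T4 3 = 5 by rewrite T4S_list //= t1 t2.
have t4 : T4 4 = 9 by rewrite T4S_list //= t1 t2 t3.
have t5 : T4 5 = 13 by rewrite T4S_list //= t1 t2 t3 t4.
have t6 : T4 6 = 17 by rewrite T4S_list //= t1 t2 t3 t4 t5.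
have t7 : T4 7 = 25 by rewrite T4S_list //= t1 t2 t3 t4 t5 t6.
have t8 : T4 8 = 33 by rewrite T4S_list //= t1 t2 t3 t4 t5 t6 t7.
by case: n => [|[|[|[|[|[|[|[|[|n]]]]]]]]].
Qed.

Lemma incr m : 6 <= m -> T4 m <= T4 m.-1 + 2 ^ (m - 4).
Proof.
elim/ltn_ind: m => m IH Hm.
case: m IH Hm => [|n] IH Hm //=.
have [k [Hk E]] := @T4_att n ltac:(lia).
have Hk1 : 1 <= k.+1 < n.+1 by lia.
have L1 := @T4_le _ _ Hk1.
have Hk2 : 1 <= k < n.+1 by lia.
have L2 := @T4_le _ _ Hk2.
rewrite /T3 in E L1 L2.
have P1 : 1 <= 2 ^ k by rewrite expn_gt0.
have P2 : 1 <= 2 ^ k.+1 by rewrite expn_gt0.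
rewrite expnS in L1 P2.
case: (leqP k (n - 3)) => Hkn.
  have Hp : 2 ^ k <= 2 ^ (n - 3) by rewrite leq_exp2l //; lia.
  rewrite ?subSS in L1 *. lia.
have Hsm : n.+1 - k <= 3 by lia.
have Hge : 2 <= n.+1 - k by lia.
have D : T4 (n.+1 - k) <= T4 (n - k) + 2.
  have -> : n.+1 - k = (n - k).+1 by lia.
  have : n - k = 1 \/ n - k = 2 by lia.
  by case=> ->; rewrite !T4_small.
have : 4 <= 2 ^ (n - 3).
  have -> : 4 = 2 ^ 2 by [].
  rewrite leq_exp2l //; lia.
have -> : n.+1 - 4 = n - 3 by lia.
lia.
Qed.

Theorem lemma3 :
  (forall n : nat, 1 <= n <= 8 -> FS_half n = T4 n) /\
  (forall n : nat, 9 <= n -> FS_half n > T4 n).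
Proof.
split.
  move=> n Hn; rewrite /FS_half /T3.
  by case: n Hn => [|[|[|[|[|[|[|[|[|n]]]]]]]]] //= _; rewrite !T4_small.
move=> n Hn; rewrite /FS_half.
have Hh : n./2 <= n - n./2 <= n./2.+1.
  have := odd_double_half n; lia.
case: (leqP n 9) => H9.
  have -> : n = 9 by lia.
  have := @T4_le 9 4 erefl.
  rewrite /T3 /= (@T4_small 4) // (@T4_small 5) //=.
  by move=> L; apply: (leq_ltn_trans L).
have H5 : 5 <= n./2 by have := odd_double_half n; lia.
set h := n./2 in Hh H5 *.
set k := n - h - 1.
have Hk : 1 <= k < n by rewrite /k; lia.
have L := @T4_le n k Hk.
have I := @incr h.+1 ltac:(lia).
have e0 : n - k = h.+1 by rewrite /k; lia.
rewrite e0 /= in L I.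
have e1 : n - h = k.+1 by rewrite /k; lia.
have e2 : 2 * 2 ^ (h.+1 - 4) < 2 ^ k.
  rewrite -expnS ltn_exp2l //; rewrite /k; lia.
rewrite /T3 e1 expnS in L *.
have P : 0 < 2 ^ k by rewrite expn_gt0.
lia.
Qed.
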